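(* Let $\mathcal N$ be a network with parties $A_1,\dots,A_n$ all of whose sources are bipartite (each source is adjacent to exactly two parties), and let $p(a_1,\dots,a_n)$ be the output distribution of a causally consistent model on $\mathcal N$ (finite output alphabets). For each $i$ let $f_i$ be an arbitrary real-valued function of the output $a_i$. Then the covariance matrix $\mathcal C(f_1,\dots,f_n)$ admits an $\mathcal N$-compatible matrix decomposition.
   Context: A network $\mathcal N$ is a bipartite graph between sources $S_\alpha$ ($\alpha=1,\dots,m$) and parties $A_i$ ($i=1,\dots,n$); $\alpha\to i$ means $S_\alpha$ is adjacent to $A_i$. Every source has at least one adjacent party, every party has at least one adjacent source, and no two sources have comparable (under inclusion) sets of adjacent parties. Covariance matrix: for functions $f_i(a_i)$ and a joint distribution $p$ of outputs, $\mathcal C=\mathcal C(f_1,\dots,f_n)$ is the $n\times n$ matrix with $\mathcal C_{ij}=\mathbb E[\bar f_i f_j]-\mathbb E[\bar f_i]\,\mathbb E[f_j]$. $\mathcal N$-compatible matrix decomposition: for each source $\alpha$, let $\mathcal L_\alpha$ be the set of $n\times n$ complex positive semidefinite matrices $M_\alpha$ with $(M_\alpha)_{ij}\neq 0$ only if $\alpha\to i$ and $\alpha\to j$. A positive semidefinite $n\times n$ matrix $M$ admits an $\mathcal N$-compatible matrix decomposition if $M=\sum_\alpha M_\alpha$ with $M_\alpha\in\mathcal L_\alpha$ for all $\alpha$. Non-fanout inflation of order $d\ge 2$: choose, for every pair $(\alpha,i)$ with $\alpha\to i$, a permutation $\pi_i^\alpha$ of $\{1,\dots,d\}$. The inflated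 network $\widetilde{\mathcal N}$ has parties $A_i^{(k)}$ and sources $S_\alpha^{(k)}$ ($1\le k\le d$), with $S_\alpha^{(k)}$ adjacent to $A_i^{((\pi_i^\alpha)^{-1}(k))}$ whenever $\alpha\to i$, and no other adjacencies. Causally consistent model on $\mathcal N$: a joint distribution $p(a_1,\dots,a_n)$ of the outputs of $\mathcal N$ together with, for every non-fanout inflation $\widetilde{\mathcal N}$ of every order $d\ge2$, a joint distribution of the outputs $a_i^{(k)}$ of its parties, such that: (C0) if $A_i\neq A_j$ share no source in $\mathcal N$, then $p(a_i,a_j)=p(a_i)p(a_j)$; (C1) in every inflation, each $a_i^{(k)}$ has marginal distribution $p(a_i)$, and if $A_i^{(k)}$ and $A_j^{(l)}$ with $i\neq j$ share a source in $\widetilde{\mathcal N}$, then the joint distribution of $(a_i^{(k)},a_j^{(l)})$ equals $p(a_i,a_j)$; (C2) in every inflation, if two distinct parties share no source, the joint distribution of their outputs factorizes into the product of their marginals. *)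

(* Defs.v *)
From HB Require Import structures.
From mathcomp Require Import all_boot all_order all_algebra all_fingroup.
From mathcomp Require Import reals complex.
Set Implicit Arguments. Unset Strict Implicit. Unset Printing Implicit Defensive.
Import Order.TTheory GRing.Theory Num.Theory.
Local Open Scope ring_scope.

(* A network with m sources and n parties: adj a i means S_a -> A_i. *)
Definition is_network (m n : nat) (adj : 'I_m -> 'I_n -> bool) : Prop :=
  [/\ (forall a : 'I_m, exists i : 'I_n, adj a i),
      (forall i : 'I_n, exists a : 'I_m, adj a i) &
      (forall a b : 'I_m, a != b -> ~ (forall i : 'I_n, adj a i -> adj b i))].

Definition bipartite_sources (m n : nat) (adj : 'I_m -> 'I_n -> bool) : Prop :=
  forall a : 'I_m, #|[set i : 'I_n | adj a i]| = 2%N.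

Definition share_source (m n : nat) (adj : 'I_m -> 'I_n -> bool) (i j : 'I_n) : Prop :=
  exists a : 'I_m, adj a i && adj a j.

Definition is_dist (R : realType) (I T : finType) (q : {ffun I -> T} -> R) : Prop :=
  (forall x, 0 <= q x) /\ \sum_x q x = 1.

Definition marg1 (R : realType) (I T : finType) (q : {ffun I -> T} -> R)
  (i : I) (s : T) : R := \sum_(x : {ffun I -> T} | x i == s) q x.

Definition marg2 (R : realType) (I T : finType) (q : {ffun I -> T} -> R)
  (i j : I) (s t : T) : R := \sum_(x : {ffun I -> T} | (x i == s) && (x j == t)) q x.

(* Non-fanout inflation of order d with permutations pi a i = pi_i^a.
   Party (i,l) = A_i^(l) is adjacent to source (a,k) = S_a^(k) iff a -> i and
   l = (pi_i^a)^-1 k, i.e. k = pi_i^a l. *)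
Definition infl_adj (m n d : nat) (adj : 'I_m -> 'I_n -> bool)
  (pi : 'I_m -> 'I_n -> {perm 'I_d}) (s : 'I_m * 'I_d) (x : 'I_n * 'I_d) : bool :=
  adj s.1 x.1 && (s.2 == pi s.1 x.1 x.2).

Definition infl_share (m n d : nat) (adj : 'I_m -> 'I_n -> bool)
  (pi : 'I_m -> 'I_n -> {perm 'I_d}) (x y : 'I_n * 'I_d) : Prop :=
  exists s : 'I_m * 'I_d, infl_adj adj pi s x && infl_adj adj pi s y.

(* Causally consistent model on the network, with output distribution p.
   Q d pi is the joint output distribution of the inflation of order d
   given by pi (only constrained for d >= 2). *)
Definition causally_consistent (R : realType) (T : finType) (m n : nat)
  (adj : 'I_m -> 'I_n -> bool) (p : {ffun 'I_n -> T} -> R) : Prop :=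
  [/\ is_dist p,
      (* C0 *)
      (forall i j : 'I_n, i != j -> ~ share_source adj i j ->
         forall s t, marg2 p i j s t = marg1 p i s * marg1 p j t) &
      exists Q : forall d : nat, ('I_m -> 'I_n -> {perm 'I_d}) ->
                   {ffun ('I_n * 'I_d)%type -> T} -> R,
        forall (d : nat) (pi : 'I_m -> 'I_n -> {perm 'I_d}), (2 <= d)%N ->
        [/\ is_dist (Q d pi),
            (* C1 *)
            (forall (x : 'I_n * 'I_d) s, marg1 (Q d pi) x s = marg1 p x.1 s),
            (forall x y : 'I_n * 'I_d, x.1 != y.1 -> infl_share adj pi x y ->
               forall s t, marg2 (Q d pi) x y s t = marg2 p x.1 y.1 s t) &
            (* C2 *)
            (forall x y : 'I_n * 'I_d, x != y -> ~ infl_share adj pi x y ->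
               forall s t, marg2 (Q d pi) x y s t
                           = marg1 (Q d pi) x s * marg1 (Q d pi) y t)]].

Definition expect (R : realType) (T : finType) (n : nat)
  (p : {ffun 'I_n -> T} -> R) (g : {ffun 'I_n -> T} -> R) : R :=
  \sum_x p x * g x.

Definition cov_matrix (R : realType) (T : finType) (n : nat)
  (p : {ffun 'I_n -> T} -> R) (f : 'I_n -> T -> R) : 'M[R]_n :=
  \matrix_(i, j) (expect p (fun x => f i (x i) * f j (x j))
                  - expect p (fun x => f i (x i)) * expect p (fun x => f j (x j))).

Definition psd (R : rcfType) (n : nat) (M : 'M[R[i]]_n) : Prop :=
  (map_mx Num.conj M)^T = M /\
  forall v : 'cV[R[i]]_n, 0 <= ((map_mx Num.conj v)^T *m M *m v) 0 0.

Definition compatible_decomposition (R : rcfType) (m n : nat)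
  (adj : 'I_m -> 'I_n -> bool) (M : 'M[R[i]]_n) : Prop :=
  exists Ms : 'I_m -> 'M[R[i]]_n,
    (forall a : 'I_m, psd (Ms a) /\
       forall i j : 'I_n, Ms a i j != 0 -> adj a i && adj a j) /\
    M = \sum_(a < m) Ms a.

Definition realC (R : rcfType) (r : R) : R[i] := (r%:C)%C.

(* Main.v *)
Require Import Defs.
From HB Require Import structures.
From mathcomp Require Import all_boot all_order all_algebra all_fingroup.
From mathcomp Require Import reals complex.
From mathcomp Require Import ring lra.
Set Implicit Arguments. Unset Strict Implicit. Unset Printing Implicit Defensive.
Import Order.TTheory GRing.Theory Num.Theory.
Local Open Scope ring_scope.
Lemma realC_conj (R : rcfType) (x : R) : Num.conj (realC x) = realC x.
Proof. exact: conjc_real. Qed.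
Lemma realC_add (R : rcfType) (x y : R) : realC (x + y) = realC x + realC y.
Proof. by rewrite /realC rmorphD. Qed.
Lemma realC_mul (R : rcfType) (x y : R) : realC (x * y) = realC x * realC y.
Proof. by rewrite /realC rmorphM. Qed.
Lemma realC_ge0 (R : rcfType) (x : R) : 0 <= x -> 0 <= realC x.
Proof. by rewrite /realC ler0c. Qed.

Lemma psd_rank1_diag (R : rcfType) n (lam : R) (u d : 'I_n -> R) :
  0 <= lam -> (forall r, 0 <= d r) ->
  psd (\matrix_(r, s) realC (lam * u r * u s + (r == s)%:R * d r)).
Proof.
move=> hl hd; split.
  apply/matrixP => r s; rewrite !mxE realC_conj; congr realC.
  rewrite eq_sym; case: eqP => [->|_]; first by [].
  by rewrite !mul0r !addr0 -!mulrA [u s * _]mulrC.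
move=> v; rewrite !mxE.
set S := \sum_j realC (u j) * v j 0.
rewrite [X in 0 <= X](_ : _ = \sum_j (realC lam * (Num.conj S * (realC (u j) * v j 0))
    + realC (d j) * (Num.conj (v j 0) * v j 0))).
  2: {
  apply: eq_bigr => j _; rewrite !mxE /S rmorph_sum /= !big_distrl /= big_distrr /=.
  rewrite (bigD1 j) //= [in RHS](bigD1 j) //= !mxE eqxx mul1r.
  rewrite (eq_bigr (fun i => realC lam * ((realC (u i) * v i 0)^* * (realC (u j) * v j 0)))).
    rewrite !realC_add !realC_mul !rmorphM /= !realC_conj; ring.
  move=> i /negbTE hij; rewrite !mxE hij mul0r addr0 !realC_mul !rmorphM /= !realC_conj; ring.
  }
rewrite big_split /= -big_distrr /= -mulr_sumr.
apply: addr_ge0; first by apply: mulr_ge0; [exact: realC_ge0| rewrite mulrC; exact: mul_conjC_ge0].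
apply: sumr_ge0 => k _; apply: mulr_ge0; first exact: realC_ge0.
rewrite mulrC; exact: mul_conjC_ge0.
Qed.
Lemma sumD1 (R : realFieldType) n (A : {set 'I_n}) k (F : 'I_n -> R) :
  k \in A -> \sum_(i in A) F i = F k + \sum_(i in A :\ k) F i.
Proof. by move=> hk; rewrite (big_setD1 k hk). Qed.

Lemma quad_expand (R : realFieldType) n (A : {set 'I_n}) (B : 'I_n -> 'I_n -> R) k (t : R) (v : 'I_n -> R) :
  (forall i j, B i j = B j i) -> k \in A ->
  \sum_(i in A) \sum_(j in A) (if i == k then t else v i) * B i j * (if j == k then t else v j)
  = B k k * t ^+ 2 + 2 * t * \sum_(j in A :\ k) B k j * v j
    + \sum_(i in A :\ k) \sum_(j in A :\ k) v i * B i j * v j.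
Proof.
move=> hs hk.
have eqw : forall F : 'I_n -> R, \sum_(i in A :\ k) (if i == k then t else v i) * F i
              = \sum_(i in A :\ k) v i * F i.
  by move=> F; apply: eq_bigr => i; rewrite in_setD1 => /andP[/negbTE -> _].
rewrite (sumD1 _ hk) eqxx.
rewrite (sumD1 (fun j => t * B k j * (if j == k then t else v j)) hk).
rewrite [X in _ + X = _](eq_bigr (fun i => (if i == k then t else v i) * B i k * t + \sum_(j in A :\ k) (if i == k then t else v i) * B i j * (if j == k then t else v j))); last by move=> i _; rewrite (sumD1 _ hk) eqxx.
rewrite big_split /=.
have h1 : \sum_(i in A :\ k) t * B k i * (if i == k then t else v i) = t * \sum_(j in A :\ k) B k j * v j.
  rewrite big_distrr /=; apply: eq_bigr => i; rewrite in_setD1 => /andP[/negbTE -> _]; ring.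
have h2 : \sum_(i in A :\ k) (if i == k then t else v i) * B i k * t = t * \sum_(j in A :\ k) B k j * v j.
  rewrite big_distrr /=; apply: eq_bigr => i; rewrite in_setD1 => /andP[/negbTE -> _]; rewrite hs; ring.
have h3 : \sum_(i in A :\ k) \sum_(j in A :\ k) (if i == k then t else v i) * B i j * (if j == k then t else v j)
   = \sum_(i in A :\ k) \sum_(j in A :\ k) v i * B i j * v j.
  apply: eq_bigr => i; rewrite in_setD1 => /andP[/negbTE -> _].
  apply: eq_bigr => j; rewrite in_setD1 => /andP[/negbTE -> _]; done.
rewrite h1 h2 h3 expr2 eqxx; ring.
Qed.

Lemma zpsd_aux (R : realFieldType) n (N : nat) : forall (A : {set 'I_n}) (B : 'I_n -> 'I_n -> R),
  (#|A| < N)%N ->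
  (forall i j, B i j = B j i) ->
  (forall i j, i \in A -> j \in A -> i != j -> B i j <= 0) ->
  (forall v : 'I_n -> R, 0 <= \sum_(i in A) \sum_(j in A) v i * B i j * v j) ->
  exists x : 'I_n -> R, (forall i, i \in A -> 0 < x i) /\
     (forall i, i \in A -> 0 <= \sum_(j in A) B i j * x j).
Proof.
elim: N => [|N IH] A B //= hN hs hz hp.
have [->|/set0Pn[k hk]] := eqVneq A set0.
  by exists (fun _ => 1); split=> i; rewrite in_set0.
set A' := A :\ k.
have hN' : (#|A'| < N)%N by move: hN; rewrite /A' (cardsD1 k A) hk.
have hQ : forall t v, \sum_(i in A) \sum_(j in A) (if i == k then t else v i) * B i j * (if j == k then t else v j)
  = B k k * t ^+ 2 + 2 * t * \sum_(j in A') B k j * v j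
    + \sum_(i in A') \sum_(j in A') v i * B i j * v j.
  by move=> t v; apply: quad_expand.
have hbeta : 0 <= B k k.
  have := hp (fun i => if i == k then 1 else 0).
  rewrite (hQ 1 (fun _ => 0)).
  have -> : \sum_(j in A') B k j * 0 = 0 by apply: big1 => j _; rewrite mulr0.
  have -> : \sum_(i in A') \sum_(j in A') 0 * B i j * (0:R) = 0.
    by apply: big1 => i _; apply: big1 => j _; rewrite !mul0r.
  by rewrite !mulr0 !addr0 expr1n mulr1.
set S := fun i j => B i j - B i k * B k j / B k k.
have hSQ : forall v, \sum_(i in A') \sum_(j in A') v i * S i j * v j
   = \sum_(i in A') \sum_(j in A') v i * B i j * v j - (\sum_(j in A') B k j * v j) ^+ 2 / B k k.
  move=> v.
  have -> : (\sum_(j in A') B k j * v j) ^+ 2 / B k k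
     = \sum_(i in A') \sum_(j in A') v i * (B i k * B k j / B k k) * v j.
    rewrite expr2 big_distrl /= big_distrl /=; apply: eq_bigr => i _.
    rewrite big_distrr /= big_distrl /=; apply: eq_bigr => j _.
    rewrite (hs i k); ring.
  rewrite -sumrB; apply: eq_bigr => i _; rewrite -sumrB; apply: eq_bigr => j _.
  rewrite /S; ring.
have [y [hy1 hy2]] : exists y : 'I_n -> R, (forall i, i \in A' -> 0 < y i) /\
     (forall i, i \in A' -> 0 <= \sum_(j in A') S i j * y j).
  apply: IH => //.
  - by move=> i j; rewrite /S (hs i j) (hs i k) (hs k j); ring.
  - move=> i j hi hj hij; rewrite /S.
    move: hi hj; rewrite !in_setD1 => /andP[hik hi] /andP[hjk hj].
    rewrite subr_le0; apply: le_trans (hz _ _ hi hj hij) _.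
    apply: mulr_ge0; last by rewrite invr_ge0.
    by apply: mulr_le0; apply: hz => //; rewrite eq_sym.
  - move=> v; rewrite hSQ.
    set bv := \sum_(j in A') B k j * v j.
    have := hp (fun i => if i == k then - bv / B k k else v i).
    rewrite hQ -/bv.
    have [->|hb0] := eqVneq (B k k) 0.
      by rewrite invr0 !mulr0 => h; nra.
    have -> : B k k * (- bv / B k k) ^+ 2 + 2 * (- bv / B k k) * bv = - (bv ^+ 2 / B k k).
      by field.
    by rewrite addrC.
set bv := \sum_(j in A') B k j * y j.
have hkj : forall j, j \in A' -> B k j <= 0.
  by move=> j; rewrite in_setD1 => /andP[hjk hj]; apply: hz => //; rewrite eq_sym.
have hbv : bv <= 0.
  by apply: sumr_le0 => j hj; apply: mulr_le0_ge0; [exact: hkj | exact: ltW (hy1 _ hj)].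
have hsplit : forall (i : 'I_n) c, \sum_(j in A) B i j * (if j == k then c else y j)
    = B i k * c + \sum_(j in A') B i j * y j.
  move=> i c; rewrite (sumD1 (fun j => B i j * (if j == k then c else y j)) hk) eqxx.
  congr (_ + _); apply: eq_bigr => j; rewrite in_setD1 => /andP[/negbTE -> _]; done.
have hSy : forall i, \sum_(j in A') S i j * y j = \sum_(j in A') B i j * y j - B i k / B k k * bv.
  move=> i; rewrite /bv big_distrr /= -sumrB; apply: eq_bigr => j _; rewrite /S; ring.
have [hb0|hbn0] := eqVneq bv 0.
  have hb : forall j, j \in A' -> B k j = 0.
    move=> j hj.
    have h0 := @psumr_eq0P _ _ (fun j => j \in A') (fun j => - (B k j * y j)).
    have H1 : forall l, l \in A' -> 0 <= - (B k l * y l).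
      by move=> l hl; rewrite oppr_ge0; apply: mulr_le0_ge0; [exact: hkj | exact: ltW (hy1 _ hl)].
    have H2 : \sum_(l in A') - (B k l * y l) = 0 by rewrite sumrN -/bv hb0 oppr0.
    have /eqP := h0 H1 H2 j hj.
    have yj := hy1 _ hj.
    by rewrite oppr_eq0 mulf_eq0 (gt_eqF yj) orbF => /eqP.
  exists (fun i => if i == k then 1 else y i); split.
    by move=> i hi; case: eqP => [_|/eqP hik]; [exact: ltr01 | apply: hy1; rewrite in_setD1 hik].
  move=> i hi; rewrite hsplit.
  have [->|hik] := eqVneq i k; first by rewrite -/bv hb0 addr0 mulr1.
  have hi' : i \in A' by rewrite in_setD1 hik.
  rewrite (hs i k) hb // mul0r add0r.
  by have := hy2 _ hi'; rewrite hSy (hs i k) hb // mul0r mul0r subr0.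
have hbeta0 : B k k != 0.
  apply/eqP => hb0.
  set q := \sum_(i in A') \sum_(j in A') y i * B i j * y j.
  have := hp (fun i => if i == k then (q + 1) / (- (2 * bv)) else y i).
  rewrite hQ -/bv -/q hb0 mul0r add0r.
  have -> : 2 * ((q + 1) / - (2 * bv)) * bv = - (q + 1).
    by field.
  move=> h; have : (0:R) <= -1 by lra.
  by rewrite oppr_ge0 ler10.
have hbpos : 0 < B k k by rewrite lt_def hbeta0 hbeta.
have hbneg : bv < 0 by rewrite lt_def eq_sym hbn0 hbv.
exists (fun i => if i == k then - bv / B k k else y i); split.
  move=> i hi; case: eqP => [_|/eqP hik]; last by apply: hy1; rewrite in_setD1 hik.
  by apply: divr_gt0 => //; rewrite oppr_gt0.
move=> i hi; rewrite hsplit.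
have [->|hik] := eqVneq i k.
  by rewrite -/bv mulrC divfK // addNr.
have hi' : i \in A' by rewrite in_setD1 hik.
have := hy2 _ hi'; rewrite hSy.
suff -> : B i k * (- bv / B k k) + \sum_(j in A') B i j * y j
   = \sum_(j in A') B i j * y j - B i k / B k k * bv by [].
by field.
Qed.
Lemma sum_marg1 (R : realType) (I T : finType) (q : {ffun I -> T} -> R) (i : I) (g : T -> R) :
  \sum_x q x * g (x i) = \sum_s marg1 q i s * g s.
Proof.
rewrite (partition_big (fun x : {ffun I -> T} => x i) predT) //=.
apply: eq_bigr => s _; rewrite /marg1 big_distrl /=.
by apply: eq_bigr => x /eqP ->.
Qed.

Lemma sum_marg2 (R : realType) (I T : finType) (q : {ffun I -> T} -> R) (i j : I) (F : T -> T -> R) :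
  \sum_x q x * F (x i) (x j) = \sum_s \sum_t marg2 q i j s t * F s t.
Proof.
rewrite (partition_big (fun x : {ffun I -> T} => x i) predT) //=.
apply: eq_bigr => s _.
rewrite (partition_big (fun x : {ffun I -> T} => x j) predT) //=.
apply: eq_bigr => t _; rewrite /marg2 big_distrl /=.
by apply: eq_bigr => x /andP[/eqP -> /eqP ->].
Qed.

Lemma sum_prod_marg (R : realType) (I T : finType) (q : {ffun I -> T} -> R) (i j : I) (g h : T -> R) :
  (forall s t, marg2 q i j s t = marg1 q i s * marg1 q j t) ->
  \sum_x q x * (g (x i) * h (x j)) = (\sum_x q x * g (x i)) * (\sum_x q x * h (x j)).
Proof.
move=> hm; rewrite (sum_marg2 q i j (fun s t => g s * h t)) !sum_marg1 big_distrl /=.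
apply: eq_bigr => s _; rewrite big_distrr /=; apply: eq_bigr => t _; rewrite hm; ring.
Qed.
Lemma pair_of m n (adj : 'I_m -> 'I_n -> bool) (hbip : bipartite_sources adj) a :
  exists2 ij : 'I_n * 'I_n, ij.1 != ij.2 & forall w, adj a w = (w == ij.1) || (w == ij.2).
Proof.
have /eqP/cards2P [x [y [hxy hS]]] := hbip a.
exists (x, y) => // w.
have -> : adj a w = (w \in [set i | adj a i]) by rewrite inE.
by rewrite hS !inE.
Qed.

Lemma src_uniq m n (adj : 'I_m -> 'I_n -> bool) (hN : is_network adj)
  (hbip : bipartite_sources adj) a b r w :
  r != w -> adj a r -> adj a w -> adj b r -> adj b w -> a = b.
Proof.
move=> hrw har haw hbr hbw; apply/eqP; apply: contraT => hab.
case: hN => _ _ /(_ a b hab) H; exfalso; apply: H => i.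
have [[x y] /= hxy hp] := pair_of hbip a.
move: har haw; rewrite !hp => hr hw hi.
case/orP: hi => /eqP ->.
- case/orP: hr => /eqP hr; first by rewrite -hr.
  case/orP: hw => /eqP hw; first by rewrite -hw.
  by move: hrw; rewrite hr hw eqxx.
- case/orP: hr => /eqP hr.
  + case/orP: hw => /eqP hw; last by rewrite -hw.
    by move: hrw; rewrite hr hw eqxx.
  + by rewrite -hr.
Qed.

Lemma src_count (R : realType) m n (adj : 'I_m -> 'I_n -> bool) (hN : is_network adj)
  (hbip : bipartite_sources adj) r w (c : R) : r != w ->
  \sum_a (adj a r && adj a w)%:R * c = if [exists a, adj a r && adj a w] then c else 0.
Proof.
move=> hrw; case: existsP => [[a ha]|hno].
  rewrite (bigD1 a) //= ha mul1r big1 ?addr0 // => b hb.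
  case: (boolP (adj b r && adj b w)) => hbb; last by rewrite mul0r.
  case/andP: ha => har haw; case/andP: hbb => hbr hbw.
  by move: hb; rewrite (src_uniq hN hbip hrw hbr hbw har haw) eqxx.
apply: big1 => a _; case: (boolP (adj a r && adj a w)) => h; last by rewrite mul0r.
by case: hno; exists a.
Qed.
Lemma sum_pairs (R : realType) (I J : finType) (G : I * J -> I * J -> R) :
  \sum_X \sum_Y G X Y = \sum_r \sum_w \sum_k \sum_l G (r, k) (w, l).
Proof.
have hp : forall H : I * J -> R, \sum_X H X = \sum_r \sum_k H (r, k).
  by move=> H; rewrite pair_bigA; apply: eq_bigr => -[r k].
rewrite hp; apply: eq_bigr => r _.
under eq_bigr do rewrite hp.
by rewrite exchange_big.
Qed.

Lemma I2_cases (k : 'I_2) : k = ord0 \/ k = ord_max.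
Proof. by case: k => -[|[|//]] h; [left|right]; apply: val_inj. Qed.

Lemma sum_I2 (R : realType) (F : 'I_2 -> R) : \sum_k F k = F ord0 + F ord_max.
Proof.
rewrite big_ord_recl big_ord_recl big_ord0 addr0; congr (_ + F _).
by apply: val_inj.
Qed.
Lemma sw_eqL (b : bool) (k l : 'I_2) :
  ((if b then tperm ord0 ord_max else 1%g) k == l) = (if b then k != l else k == l).
Proof.
by case: b; case: (I2_cases k) => ->; case: (I2_cases l) => ->; rewrite ?tpermL ?tpermR ?perm1.
Qed.
Lemma sw_eqR (b : bool) (k l : 'I_2) :
  (k == (if b then tperm ord0 ord_max else 1%g) l) = (if b then k != l else k == l).
Proof.
by case: b; case: (I2_cases k) => ->; case: (I2_cases l) => ->; rewrite ?tpermL ?tpermR ?perm1.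
Qed.
Lemma infl_psd (R : realType) (T : finType) (m n : nat)
  (adj : 'I_m -> 'I_n -> bool)
  (hN : is_network adj) (hbip : bipartite_sources adj)
  (p : {ffun 'I_n -> T} -> R) (hp : causally_consistent adj p)
  (f : 'I_n -> T -> R) (v : 'I_n -> R) :
  0 <= \sum_r \sum_w v r * (if r == w then cov_matrix p f r r else - `|cov_matrix p f r w|) * v w.
Proof.
set C := cov_matrix p f.
case: hp => hdist hC0 [Q hQ].
pose mE r := expect p (fun x => f r (x r)).
pose PE r w := expect p (fun x => f r (x r) * f w (x w)).
have hC : forall r w, C r w = PE r w - mE r * mE w by move=> r w; rewrite /C /cov_matrix mxE.
have hCs : forall r w, C r w = C w r.
  move=> r w; rewrite !hC /PE; congr (_ - _); last exact: mulrC.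
  by rewrite /expect; apply: eq_bigr => x _; rewrite [f r _ * _]mulrC.
have hC0' : forall r w, r != w -> ~~ [exists a, adj a r && adj a w] -> C r w = 0.
  move=> r w hrw hno; rewrite hC.
  have hsh : ~ share_source adj r w by case=> a ha; move/existsP: hno; apply; exists a.
  rewrite /PE /mE /expect (sum_prod_marg (fun s => f r s) (fun s => f w s)) ?subrr //.
  exact: hC0.
have : forall a, exists ij : 'I_n * 'I_n, ij.1 != ij.2 /\ forall w, adj a w = (w == ij.1) || (w == ij.2).
  by move=> a; have [ij h1 h2] := pair_of hbip a; exists ij.
case/fin_all_exists => ij hij.
pose tw a := 0 < C (ij a).1 (ij a).2.
pose sw : {perm 'I_2} := tperm ord0 ord_max.
pose pi : 'I_m -> 'I_n -> {perm 'I_2} := fun a r => if (r == (ij a).2) && tw a then sw else 1%g.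
have [hQd hm1 hm2 hc2] := hQ 2%N pi erefl.
set Qd := Q 2%N pi in hQd hm1 hm2 hc2.
pose shareb (X Y : 'I_n * 'I_2) := [exists a, adj a X.1 && adj a Y.1 && (pi a X.1 X.2 == pi a Y.1 Y.2)].
have hshare : forall X Y, infl_share adj pi X Y <-> shareb X Y.
  move=> X Y; split.
    case=> -[a k] /andP[/andP[/= h1 /eqP h2] /andP[/= h3 /eqP h4]].
    by apply/existsP; exists a; rewrite h1 h3 -h2 -h4 eqxx.
  case/existsP => a /andP[/andP[h1 h3] /eqP h2].
  by exists (a, pi a X.1 X.2); rewrite /infl_adj /= h1 h3 h2 !eqxx.
pose EQ (X Y : 'I_n * 'I_2) := \sum_y Qd y * (f X.1 (y X) * f Y.1 (y Y)).
have hmQ : forall X, \sum_y Qd y * f X.1 (y X) = mE X.1.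
  move=> X; rewrite (sum_marg1 Qd X (f X.1)) /mE /expect (sum_marg1 p X.1 (f X.1)).
  by apply: eq_bigr => s _; rewrite hm1.
have hEQ : forall X Y, EQ X Y = if X == Y then PE X.1 X.1 else
     if (X.1 != Y.1) && shareb X Y then PE X.1 Y.1 else mE X.1 * mE Y.1.
  move=> X Y; case: eqP => [<-|/eqP hXY].
    rewrite /EQ (sum_marg1 Qd X (fun s => f X.1 s * f X.1 s)) /PE /expect.
    rewrite (sum_marg1 p X.1 (fun s => f X.1 s * f X.1 s)).
    by apply: eq_bigr => s _; rewrite hm1.
  case: ifP => [/andP[h1 h2]|hn].
    rewrite /EQ (sum_marg2 Qd X Y (fun s t => f X.1 s * f Y.1 t)) /PE /expect.
    rewrite (sum_marg2 p X.1 Y.1 (fun s t => f X.1 s * f Y.1 t)).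
    apply: eq_bigr => s _; apply: eq_bigr => t _; rewrite hm2 //.
    by apply/hshare.
  have hns : ~ infl_share adj pi X Y.
    move/hshare => hs; move: hn; rewrite hs andbT => /negbFE/eqP h1.
    case/existsP: hs => a /andP[_ /eqP h2].
    move: h2; rewrite h1 => /perm_inj h2.
    by move: hXY; case: X Y h1 h2 => [r k] [w l] /= -> ->; rewrite eqxx.
  rewrite /EQ (sum_prod_marg (fun s => f X.1 s) (fun s => f Y.1 s)); last exact: hc2.
  by rewrite !hmQ.
pose c (X : 'I_n * 'I_2) := v X.1 * (if X.2 == ord0 then 1 else -1).
have h0 : 0 <= \sum_y Qd y * (\sum_X c X * f X.1 (y X)) ^+ 2.
  case: hQd => hQ0 _.
  by apply: sumr_ge0 => y _; apply: mulr_ge0; [exact: hQ0 | exact: sqr_ge0].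
have hexp : \sum_y Qd y * (\sum_X c X * f X.1 (y X)) ^+ 2 = \sum_X \sum_Y c X * c Y * EQ X Y.
  transitivity (\sum_y \sum_X \sum_Y c X * c Y * (Qd y * (f X.1 (y X) * f Y.1 (y Y)))).
    apply: eq_bigr => y _; rewrite expr2 big_distrl /= big_distrr /=; apply: eq_bigr => X _.
    rewrite big_distrr /= big_distrr /=; apply: eq_bigr => Y _; ring.
  rewrite exchange_big; apply: eq_bigr => X _; rewrite exchange_big; apply: eq_bigr => Y _.
  by rewrite /EQ big_distrr.
have hne : (ord_max == ord0 :> 'I_2) = false by [].
have e00 : (ord0 == ord0 :> 'I_2) = true by [].
have e11 : (ord_max == ord_max :> 'I_2) = true by [].
have hne' : (ord0 == ord_max :> 'I_2) = false by [].
have hkey : forall r w, \sum_k \sum_l c (r, k) * c (w, l) * EQ (r, k) (w, l)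
   = 2 * (v r * (if r == w then C r r else - `|C r w|) * v w).
  move=> r w; rewrite !sum_I2 !hEQ /c /= !xpair_eqE /= e00 e11 hne hne' /=.
  have [<-|hrw] := eqVneq r w.
    by rewrite /= hC; ring.
  rewrite /=.
  case: (boolP [exists a, adj a r && adj a w]) => [/existsP[a /andP[har haw]] | hno].
    have hsh : forall k l, shareb (r, k) (w, l) = (if 0 < C r w then k != l else k == l).
      move=> k l.
      have -> : shareb (r, k) (w, l) = (pi a r k == pi a w l).
        apply/existsP/idP => [[b /andP[/andP[hbr hbw] he]]|he]; last by exists a; rewrite har haw.
        by rewrite -(src_uniq hN hbip hrw hbr hbw har haw).
      case: (hij a) => hij12 hadj.
      move: (har) (haw); rewrite !hadj /pi.
      case/orP=> /eqP hr; case/orP=> /eqP hw.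
      - by move: hrw; rewrite hr hw eqxx.
      - have e2 : ((ij a).2 == (ij a).2) = true by apply/eqP.
        rewrite hr hw (negbTE hij12) e2 /= perm1 sw_eqR; done.
      - have e2 : ((ij a).2 == (ij a).2) = true by apply/eqP.
        have e3 : ((ij a).1 == (ij a).2) = false by apply/negbTE.
        rewrite hr hw e2 e3 /= perm1 sw_eqL (hCs (ij a).2); done.
      - by move: hrw; rewrite hr hw eqxx.
    rewrite !hsh !eqxx hne hne' /=.
    have [hpos|hneg] := ltP 0 (C r w).
      by rewrite (gtr0_norm hpos) /= hC; ring.
    by rewrite (ler0_norm hneg) opprK hC; ring.
  have hfalse : forall k l, shareb (r, k) (w, l) = false.
    move=> k l; apply/negbTE; apply/existsP => -[a /andP[/andP[h1 h2] _]].
    by move/existsP: hno; apply; exists a; rewrite h1 h2.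
  rewrite !hfalse (hC0' _ _ hrw hno) normr0 oppr0; ring.
move: h0; rewrite hexp sum_pairs.
rewrite (eq_bigr (fun r => 2 * \sum_w (v r * (if r == w then C r r else - `|C r w|) * v w))).
  by rewrite -mulr_sumr pmulr_rge0.
move=> r _; rewrite mulr_sumr; apply: eq_bigr => w _; exact: hkey.
Qed.
Lemma sumT (R : realType) n (F : 'I_n -> R) : \sum_(i in [set: 'I_n]) F i = \sum_i F i.
Proof. by apply: eq_bigl => i; rewrite in_setT. Qed.

Unset Implicit Arguments.
Theorem theorem2 (R : realType) (T : finType) (m n : nat)
  (adj : 'I_m -> 'I_n -> bool)
  (hN : is_network adj) (hbip : bipartite_sources adj)
  (p : {ffun 'I_n -> T} -> R) (hp : causally_consistent adj p)
  (f : 'I_n -> T -> R) :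
  compatible_decomposition adj (map_mx (@realC R) (cov_matrix p f)).
Proof.
have hinfl := infl_psd hN hbip hp f.
set C := cov_matrix p f in hinfl *.
case: (hp) => hdist hC0 _.
pose mE r := expect p (fun x => f r (x r)).
pose PE r w := expect p (fun x => f r (x r) * f w (x w)).
have hC : forall r w, C r w = PE r w - mE r * mE w by move=> r w; rewrite /C /cov_matrix mxE.
have hCs : forall r w, C r w = C w r.
  move=> r w; rewrite !hC /PE; congr (_ - _); last exact: mulrC.
  by rewrite /expect; apply: eq_bigr => x _; rewrite [f r _ * _]mulrC.
have hC0' : forall r w, r != w -> ~~ [exists a, adj a r && adj a w] -> C r w = 0.
  move=> r w hrw hno; rewrite hC.
  have hsh : ~ share_source adj r w by case=> a ha; move/existsP: hno; apply; exists a.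
  rewrite /PE /mE /expect (sum_prod_marg (fun s => f r s) (fun s => f w s)) ?subrr //.
  exact: hC0.
pose Bm r w := if r == w then C r r else - `|C r w|.
have [x [hx1 hx2]] : exists x : 'I_n -> R, (forall i, i \in [set: 'I_n] -> 0 < x i) /\
     (forall i, i \in [set: 'I_n] -> 0 <= \sum_(j in [set: 'I_n]) Bm i j * x j).
  apply: (@zpsd_aux R n #|[set: 'I_n]|.+1) => //.
  - move=> i j; rewrite /Bm eq_sym; case: eqP => [->|_] //; by rewrite hCs.
  - by move=> i j _ _ /negbTE hij; rewrite /Bm hij oppr_le0.
  - by move=> v; rewrite sumT; under eq_bigr do rewrite sumT; exact: hinfl.
have hx : forall i, 0 < x i by move=> i; apply: hx1; rewrite in_setT.
pose bx r := \sum_j Bm r j * x j.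
have hbx : forall r, 0 <= bx r by move=> r; rewrite /bx -sumT; apply: hx2; rewrite in_setT.
have : forall a, exists ij : 'I_n * 'I_n, ij.1 != ij.2 /\ forall w, adj a w = (w == ij.1) || (w == ij.2).
  by move=> a; have [ij h1 h2] := pair_of hbip a; exists ij.
case/fin_all_exists => ij hij.
have [sr hsr] : exists sr : 'I_n -> 'I_m, forall i, adj (sr i) i.
  by case: hN => _ hN2 _; exact: fin_all_exists hN2.
pose lam a := `|C (ij a).1 (ij a).2| / (x (ij a).1 * x (ij a).2).
pose sg a : R := if 0 < C (ij a).1 (ij a).2 then 1 else -1.
pose u a r := if r == (ij a).1 then x (ij a).2 else if r == (ij a).2 then sg a * x (ij a).1 else 0.
pose dd a r := if sr r == a then bx r / x r else 0.
pose Ms a := \matrix_(r, s) realC (lam a * u a r * u a s + (r == s)%:R * dd a r).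
have hu0 : forall a t, ~~ adj a t -> u a t = 0 /\ dd a t = 0.
  move=> a t; case: (hij a) => _ ->; rewrite negb_or => /andP[/negbTE h1 /negbTE h2].
  split; first by rewrite /u h1 h2.
  rewrite /dd; case: eqP => // hs; exfalso.
  by move: (hsr t); rewrite hs; case: (hij a) => _ ->; rewrite h1 h2.
have hxn : forall i, x i != 0 by move=> i; exact: lt0r_neq0 (hx i).
have hsg : forall a, sg a * `|C (ij a).1 (ij a).2| = C (ij a).1 (ij a).2.
  move=> a; rewrite /sg; have [hpos|hneg] := ltP 0 (C (ij a).1 (ij a).2).
    by rewrite mul1r gtr0_norm.
  by rewrite ler0_norm // mulN1r opprK.
have hsg2 : forall a, sg a * sg a = 1.
  by move=> a; rewrite /sg; case: ifP => _; rewrite ?mulr1 ?mulN1r ?opprK.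
have F1 : forall a r s, r != s -> lam a * u a r * u a s = (adj a r && adj a s)%:R * C r s.
  move=> a r s hrs; case: (hij a) => hne hadj.
  rewrite !hadj /u /lam.
  have [hri|hri] := eqVneq r (ij a).1.
    have [hsj|hsj] := eqVneq s (ij a).2.
      have [hsi|hsi] := eqVneq s (ij a).1; first by move: hne; rewrite -hsi -hsj eqxx.
      rewrite hri hsj /= mul1r -[in RHS](hsg a); field.
      by rewrite !hxn.
    have [hsi|hsi] := eqVneq s (ij a).1; first by move: hrs; rewrite hri hsi eqxx.
    by rewrite /= !mulr0 mul0r.
  have [hrj|hrj] := eqVneq r (ij a).2.
    have [hsi|hsi] := eqVneq s (ij a).1.
      rewrite hrj hsi /= mul1r (hCs (ij a).2) -[in RHS](hsg a); field.
      by rewrite !hxn.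
    have [hsj|hsj] := eqVneq s (ij a).2; first by move: hrs; rewrite hrj hsj eqxx.
    by rewrite /= !mulr0 mul0r.
  by rewrite /= mulr0 mul0r mul0r.
have F2 : forall a r, lam a * u a r * u a r
   = \sum_(w | w != r) (adj a r && adj a w)%:R * (`|C r w| * x w / x r).
  move=> a r; case: (hij a) => hne hadj.
  have [hri|hri] := eqVneq r (ij a).1.
    rewrite (bigD1 (ij a).2) /=; last by rewrite hri eq_sym.
    rewrite big1 ?addr0; last first.
      move=> w /andP[hwr hwj]; rewrite (hadj w) (negbTE hwj) orbF; rewrite hri in hwr.
      by rewrite (negbTE hwr) andbF mul0r.
    rewrite !hadj hri /u.
    have -> : ((ij a).1 == (ij a).1) = true by apply/eqP.
    have -> : ((ij a).2 == (ij a).2) = true by apply/eqP.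
    rewrite /= orbT mul1r /lam; field.
    by rewrite !hxn.
  have [hrj|hrj] := eqVneq r (ij a).2.
    rewrite (bigD1 (ij a).1) /=; last by rewrite hrj.
    rewrite big1 ?addr0; last first.
      move=> w /andP[hwr hwi]; rewrite (hadj w) (negbTE hwi) /=; rewrite hrj in hwr.
      by rewrite (negbTE hwr) andbF mul0r.
    rewrite !hadj hrj /u (negbTE hne).
    have -> : ((ij a).1 == (ij a).1) = true by apply/eqP.
    have -> : ((ij a).2 == (ij a).2) = true by apply/eqP.
    have -> : ((ij a).2 == (ij a).1) = false by apply/negbTE; rewrite eq_sym.
    rewrite /= mul1r /lam (hCs (ij a).2).
    have -> : `|C (ij a).1 (ij a).2| / (x (ij a).1 * x (ij a).2) * (sg a * x (ij a).1) *
        (sg a * x (ij a).1) = `|C (ij a).1 (ij a).2| / (x (ij a).1 * x (ij a).2) * (sg a * sg a) * x (ij a).1 * x (ij a).1 by ring.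
    rewrite hsg2; field.
    by rewrite !hxn.
  rewrite /u (negbTE hri) (negbTE hrj) mulr0 big1 // => w _.
  by rewrite hadj (negbTE hri) (negbTE hrj) mul0r.
have hsum : forall r s, C r s = \sum_a (lam a * u a r * u a s + (r == s)%:R * dd a r).
  move=> r s; have [<-|hrs] := eqVneq r s.
    rewrite big_split /= (eq_bigr _ (fun a _ => F2 a r)) exchange_big /=.
    rewrite (eq_bigr (fun w => `|C r w| * x w / x r)); last first.
      move=> w hwr; rewrite eq_sym in hwr; rewrite (src_count hN hbip _ hwr).
      by case: ifP => // /negbT hno; rewrite hC0' // normr0 !mul0r.
    rewrite (bigD1 (sr r)) //=.
    have -> : \sum_(a < m | a != sr r) 1 * dd a r = 0.
      by apply: big1 => a /negbTE hne; rewrite /dd eq_sym hne mulr0.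
    rewrite addr0 mul1r.
    rewrite /dd.
    have -> : (sr r == sr r) = true by apply/eqP.
    have -> : bx r = C r r * x r - \sum_(w | w != r) `|C r w| * x w.
      rewrite /bx (bigD1 r) //= /Bm.
      have -> : (r == r) = true by apply/eqP.
      rewrite -sumrN; congr (_ + _); apply: eq_bigr => w hw.
      by rewrite eq_sym (negbTE hw) mulNr.
    rewrite -mulr_suml; field.
    by rewrite hxn.
  rewrite (eq_bigr (fun a => (adj a r && adj a s)%:R * C r s)); last first.
    by move=> a _; rewrite mul0r addr0 F1.
  rewrite (src_count hN hbip _ hrs); case: ifP => // /negbT hno.
  by rewrite hC0'.
exists Ms; split.
  move=> a; split.
    apply: psd_rank1_diag.
      by apply: divr_ge0; [exact: normr_ge0 | apply: mulr_ge0; exact: ltW (hx _)].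
    by move=> r; rewrite /dd; case: ifP => _ //; apply: divr_ge0 => //; exact: ltW (hx _).
  move=> r s; rewrite mxE; apply: contraR; rewrite negb_and => hn.
  suff -> : lam a * u a r * u a s + (r == s)%:R * dd a r = 0 by rewrite /realC rmorph0.
  case/orP: hn => /(hu0 a) [h1 h2].
    by rewrite h1 h2 mulr0 mul0r mulr0 addr0.
  rewrite h1 mulr0 add0r.
  have [hrs|hrs] := eqVneq r s; last by rewrite mul0r.
  by rewrite hrs h2 mulr0.
apply/matrixP => r s; rewrite [LHS]mxE summxE hsum /realC rmorph_sum; apply: eq_bigr => a _.
by rewrite mxE.
Qed.
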